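(* Let $m\ge1$, let $f_1,\dots,f_m$ be real numbers, let $\lambda_{i0}\ge0$ for $i=1,\dots,m$, and let $\lambda_{ij}=\lambda_{ji}\ge0$ for $1\le i<j\le m$. Consider the flow network with vertex set $V=U\cup W\cup\{r,s\}$, where $U=\{u_1,\dots,u_m\}$, $W=\{w_{ij}:1\le i<j\le m\}$, $r$ is the source and $s$ the sink; directed edge set $E=\{(r,u_i)\}_{i=1}^m\cup\{(u_i,s)\}_{i=1}^m\cup\{(u_i,w_{jk}): i\in\{j,k\},\ 1\le j<k\le m\}\cup\{(w_{ij},s):1\le i<j\le m\}$; and capacities $c(r,u_i)=|f_i|$, $c(u_i,s)=\lambda_{i0}$ for $i=1,\dots,m$, $c(u_i,w_{ij})=c(u_j,w_{ij})=\lambda_{ij}$ and $c(w_{ij},s)=\lambda_{ij}$ for $1\le i<j\le m$, with $c(v,v')=0$ whenever $(v',v)\in E$ but $(v,v')\notin E$. If the maximum value of a flow from $r$ to $s$ on this network equals $\sum_{i=1}^m|f_i|$, then there exist real numbers $\xi_{i0}\in[-\lambda_{i0},\lambda_{i0}]$ for $i=1,\dots,m$ and $\xi_{ij},\xi_{ji}\in[-\lambda_{ij},\lambda_{ij}]$ for $1\le i<j\le m$ with $|\xi_{ij}|+|\xi_{ji}|\le\lambda_{ij}$, such that $$f_i+\xi_{i0}+\sum_{j\in\{1,\dots,m\}\setminus\{i\}}\xi_{ij}=0,\qquad i=1,\dots,m.$$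
   Context: A flow on a network is defined on the set of edges together with their reversals: it is a family $\tau=\{\tau_{vv'}\}$ of reals indexed by ordered pairs $(v,v')$ with $(v,v')\in E$ or $(v',v)\in E$, satisfying skew symmetry $\tau_{vv'}=-\tau_{v'v}$; capacity constraint $\tau_{vv'}\le c(v,v')$; and flow conservation $\sum_{v'}\tau_{vv'}=0$ at every vertex $v\notin\{r,s\}$. Its value is the net flow out of the source $r$; the maximum flow value is the maximum of the value over all flows. *)

(* Defs.v *)
From mathcomp Require Import all_boot all_order all_algebra.
From mathcomp Require Import reals.
Set Implicit Arguments. Unset Strict Implicit. Unset Printing Implicit Defensive.
Import Order.TTheory GRing.Theory Num.Theory.
Local Open Scope ring_scope.

Section Flows.
Variables (R : realFieldType) (V : finType) (E : rel V) (c : V -> V -> R) (r s : V).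

Definition adj (v v' : V) : bool := E v v' || E v' v.

Definition is_flow (tau : V -> V -> R) : Prop :=
  [/\ (forall v v', adj v v' -> tau v v' = - tau v' v),
      (forall v v', adj v v' -> tau v v' <= c v v') &
      (forall v, v != r -> v != s -> \sum_(v' | adj v v') tau v v' = 0)].

Definition flow_value (tau : V -> V -> R) : R := \sum_(v' | adj r v') tau r v'.

Definition is_max_flow_value (x : R) : Prop :=
  (exists2 tau, is_flow tau & flow_value tau = x) /\
  (forall tau, is_flow tau -> flow_value tau <= x).
End Flows.

Definition Wt (m : nat) := {p : 'I_m * 'I_m | (p.1 < p.2)%N}.
(* vertices: inl (inl true) = r, inl (inl false) = s, inl (inr i) = u_i, inr w = w_ij *)
Definition vtx (m : nat) : finType := ((bool + 'I_m) + Wt m)%type.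

Definition src (m : nat) : vtx m := inl (inl true).
Definition snk (m : nat) : vtx m := inl (inl false).

Definition net_edge (m : nat) (v v' : vtx m) : bool :=
  match v, v' with
  | inl (inl true), inl (inr _) => true
  | inl (inr _), inl (inl false) => true
  | inl (inr i), inr w => (i == (sval w).1) || (i == (sval w).2)
  | inr _, inl (inl false) => true
  | _, _ => false
  end.

Definition net_cap (R : realFieldType) (m : nat) (f lam0 : 'I_m -> R)
  (lam : 'I_m -> 'I_m -> R) (v v' : vtx m) : R :=
  if net_edge v v' then
    match v, v' with
    | inl (inl true), inl (inr i) => `|f i|
    | inl (inr i), inl (inl false) => lam0 i
    | inl (inr _), inr w => lam (sval w).1 (sval w).2
    | inr w, inl (inl false) => lam (sval w).1 (sval w).2
    | _, _ => 0
    end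
  else 0.

(* Main.v *)
Require Import Defs.
From mathcomp Require Import all_boot all_order all_algebra.
From mathcomp Require Import reals.
From mathcomp Require Import zify ring lra.
Import Order.TTheory GRing.Theory Num.Theory.
Local Open Scope ring_scope.

Section Aux.
Variable m : nat.
Local Notation U i := (inl (inr i) : vtx m).

Definition wv (i j : 'I_m) : vtx m :=
  match @insub _ _ (Wt m) (i, j) with
  | Some w => inr w
  | None => match @insub _ _ (Wt m) (j, i) with
            | Some w => inr w | None => snk m end
  end.

Definition other (i : 'I_m) (w : Wt m) : 'I_m :=
  if i == (sval w).1 then (sval w).2 else (sval w).1.

Lemma vtx_sum (R : realFieldType) (P : pred (vtx m)) (F : vtx m -> R) :
  \sum_(v | P v) F v =
  \sum_(b | P (inl (inl b))) F (inl (inl b)) + \sum_(i | P (U i)) F (U i)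
  + \sum_(w | P (inr w)) F (inr w).
Proof. by rewrite !big_sumType. Qed.

Lemma other_neq i w : adj (@net_edge m) (U i) (inr w) -> other i w != i.
Proof.
case: w => [[a b] hab]; rewrite /adj /other /= orbF.
case: eqP => [E|ne] /= _.
  subst a.
  by apply/eqP => E; move: hab; rewrite /= E ltnn.
by rewrite eq_sym; apply/eqP.
Qed.

Lemma inner i j : j != i -> exists w0 : Wt m,
  wv i j = inr w0 /\
  forall w, (adj (@net_edge m) (U i) (inr w) && (other i w == j)) = (w == w0).
Proof.
move=> hji.
have [hij|hij|E] := ltngtP i j; last by move: hji; rewrite (val_inj E) eqxx.
- exists (exist _ (i, j) hij); split.
    by rewrite /wv (@insubT _ _ (Wt m) (i, j) hij).
  case=> [[a b] hab]; rewrite /adj /other /= orbF.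
  transitivity ((a, b) == (i, j)); last by [].
  rewrite xpair_eqE.
  case: eqP => [E|ne] /=; first by subst a; rewrite eqxx.
  case: eqP => [Eb|ne2] /=.
    have -> : (a == i) = false by apply/eqP => E; apply: ne.
    apply/eqP => E; move: hab hij; rewrite /= E Eb; lia.
  by have -> : (a == i) = false by apply/eqP => E; apply: ne.
- exists (exist _ (j, i) hij); split.
    rewrite /wv insubF ?(@insubT _ _ (Wt m) (j, i) hij) //=; apply/negbTE; rewrite -leqNgt ltnW //.
  case=> [[a b] hab]; rewrite /adj /other /= orbF.
  transitivity ((a, b) == (j, i)); last by [].
  rewrite xpair_eqE.
  case: eqP => [Ea|ne] /=.
    have -> : (b == j) = false by apply/eqP => E; move: hab hij; rewrite /= E -Ea; lia.
    by have -> : (a == j) = false by apply/eqP => E; move: hab hij; rewrite /= -E -Ea; lia.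
  case: eqP => [Eb|ne2] /=; first by rewrite Eb eqxx andbT.
  have -> : (b == i) = false by apply/eqP => E; apply: ne2.
  by rewrite andbF.
Qed.
End Aux.
Arguments wv {m}. Arguments other {m}. Arguments other_neq {m}. Arguments inner {m}.

Local Notation U i := (inl (inr i) : vtx _).

Theorem lemma2 (R : realType) (m : nat) (f lam0 : 'I_m -> R)
  (lam : 'I_m -> 'I_m -> R) :
  (0 < m)%N ->
  (forall i, 0 <= lam0 i) ->
  (forall i j : 'I_m, (i < j)%N -> lam i j = lam j i /\ 0 <= lam i j) ->
  is_max_flow_value (@net_edge m) (net_cap f lam0 lam) (src m) (snk m)
    (\sum_(i < m) `|f i|) ->
  exists (xi0 : 'I_m -> R) (xi : 'I_m -> 'I_m -> R),
    [/\ (forall i, - lam0 i <= xi0 i <= lam0 i),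
        (forall i j : 'I_m, (i < j)%N ->
           [/\ - lam i j <= xi i j <= lam i j,
               - lam i j <= xi j i <= lam i j &
               `|xi i j| + `|xi j i| <= lam i j]) &
        (forall i, f i + xi0 i + \sum_(j < m | j != i) xi i j = 0)].
Proof.
move=> _ hl0 hl [[tau [Hsk Hcap Hcons] Hval] _].
have HA : forall i, tau (src m) (U i) = `|f i|.
  have Hv : flow_value (@net_edge m) (src m) tau = \sum_i tau (src m) (U i).
    rewrite /flow_value vtx_sum.
    have -> : \sum_(b | adj (@net_edge m) (src m) (inl (inl b))) tau (src m) (inl (inl b)) = 0.
      by rewrite big_pred0 // => -[].
    have -> : \sum_(w | adj (@net_edge m) (src m) (inr w)) tau (src m) (inr w) = 0.
      by rewrite big_pred0.
    rewrite add0r addr0.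
    by apply: eq_bigl => i.
  have le : forall i, tau (src m) (U i) <= `|f i|.
    by move=> i; exact: (Hcap (src m) (U i)).
  have H0 : \sum_i (`|f i| - tau (src m) (U i)) = 0.
    by rewrite sumrB -Hv Hval subrr.
  move=> i; apply/eqP; rewrite eq_sym -subr_eq0; apply/eqP.
  by apply: (psumr_eq0P _ H0) => // k _; rewrite subr_ge0.
have HB : forall i : 'I_m, tau (U i) (src m) + tau (U i) (snk m)
    + \sum_(j < m | j != i) tau (U i) (wv i j) = 0.
  move=> i; have := Hcons (U i) isT isT; rewrite vtx_sum.
  have -> : \sum_(b | adj (@net_edge m) (U i) (inl (inl b))) tau (U i) (inl (inl b))
     = tau (U i) (src m) + tau (U i) (snk m) by rewrite big_mkcond big_bool.
  have -> : \sum_(k | adj (@net_edge m) (U i) (U k)) tau (U i) (U k) = 0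
    by rewrite big_pred0.
  have -> : \sum_(w | adj (@net_edge m) (U i) (inr w)) tau (U i) (inr w)
     = \sum_(j < m | j != i) tau (U i) (wv i j).
    rewrite (partition_big (other i) (fun j => j != i)); last exact: other_neq i.
    apply: eq_bigr => j hj; have [w0 [-> Hw]] := inner i j hj.
    by rewrite (big_pred1 w0).
  by rewrite addr0.
have HC : forall i, 0 <= tau (U i) (snk m) <= lam0 i.
  move=> i; apply/andP; split; last exact: (Hcap (U i) (snk m) isT).
  rewrite (Hsk (U i) (snk m) isT) oppr_ge0; exact: (Hcap (snk m) (U i) isT).
have HD : forall (i j : 'I_m) (hij : (i < j)%N),
    [/\ 0 <= tau (U i) (inr (exist _ (i, j) hij)),
        0 <= tau (U j) (inr (exist _ (i, j) hij)) &
        tau (U i) (inr (exist _ (i, j) hij)) + tau (U j) (inr (exist _ (i, j) hij))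
          <= lam i j].
  move=> i j hij; set w : Wt m := exist _ (i, j) hij.
  have := Hcons (inr w) isT isT; rewrite vtx_sum.
  have -> : \sum_(b | adj (@net_edge m) (inr w) (inl (inl b))) tau (inr w) (inl (inl b))
     = tau (inr w) (snk m) by rewrite big_mkcond big_bool /= add0r.
  have -> : \sum_(w' | adj (@net_edge m) (inr w) (inr w')) tau (inr w) (inr w') = 0
    by rewrite big_pred0.
  have -> : \sum_(k | adj (@net_edge m) (inr w) (U k)) tau (inr w) (U k)
     = tau (inr w) (U i) + tau (inr w) (U j).
    rewrite (bigD1 i) /=; last by rewrite /adj /= eqxx.
    congr (_ + _); apply: big_pred1 => k /=; rewrite /adj /=.
    case: (eqVneq k i) => [->|nki] /=.
      by apply/esym/eqP => E; have := hij; rewrite E ltnn.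
    by rewrite andbT.
  have ai : adj (@net_edge m) (inr w) (U i) by rewrite /adj /= eqxx.
  have aj : adj (@net_edge m) (inr w) (U j) by rewrite /adj /= eqxx orbT.
  have ai' : adj (@net_edge m) (U i) (inr w) by rewrite /adj /= eqxx.
  have aj' : adj (@net_edge m) (U j) (inr w) by rewrite /adj /= eqxx orbT.
  rewrite addr0 => Hc.
  have Hs : tau (inr w) (snk m) <= lam i j := Hcap (inr w) (snk m) isT.
  have Hi : tau (inr w) (U i) <= 0 := Hcap (inr w) (U i) ai.
  have Hj : tau (inr w) (U j) <= 0 := Hcap (inr w) (U j) aj.
  rewrite (Hsk _ _ ai') (Hsk _ _ aj') !oppr_ge0 Hi Hj; split => //.
  lra.
pose sg i := if 0 <= f i then 1 else -1 : R.
have sgf i : sg i * `|f i| = f i.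
  rewrite /sg; case: ifP => h; first by rewrite mul1r ger0_norm.
  by rewrite mulN1r ltr0_norm ?opprK // ltNge h.
have sgn i x : `|sg i * x| = `|x|.
  by rewrite normrM /sg; case: ifP => _; rewrite ?normrN normr1 mul1r.
exists (fun i => - (sg i * tau (U i) (snk m))),
       (fun i j => - (sg i * tau (U i) (wv i j))).
split.
- move=> i; rewrite -ler_norml normrN sgn; have /andP[h1 h2] := HC i.
  by rewrite ger0_norm.
- move=> i j hij; have [h1 h2 h3] := HD i j hij.
  have e1 : wv i j = inr (exist _ (i, j) hij).
    by rewrite /wv (@insubT _ _ (Wt m) (i, j) hij).
  have e2 : wv j i = inr (exist _ (i, j) hij).
    rewrite /wv insubF ?(@insubT _ _ (Wt m) (i, j) hij) //=.
    by apply/negbTE; rewrite -leqNgt ltnW.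
  rewrite e1 e2 !normrN !sgn !ger0_norm //.
  have b1 : `|- (sg i * tau (U i) (inr (exist _ (i, j) hij)))| <= lam i j.
    rewrite normrN sgn ger0_norm //; lra.
  have b2 : `|- (sg j * tau (U j) (inr (exist _ (i, j) hij)))| <= lam i j.
    rewrite normrN sgn ger0_norm //; lra.
  by rewrite -!ler_norml b1 b2.
- move=> i; rewrite sumrN -mulr_sumr.
  have := HB i; rewrite (Hsk (U i) (src m) isT) HA => H.
  have Hf : `|f i| = tau (U i) (snk m) + \sum_(j < m | j != i) tau (U i) (wv i j).
    lra.
  by rewrite -{1}sgf Hf; ring.
Qed.
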